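(* Let $M_n=V\,{\rm diag}(\Lambda_{n1},\dots,\Lambda_{nd})V^{-1}$, $n=1,\dots,N$, with $V$ real invertible and $\Lambda_{ni}$ real, such that $\gamma=\min_{i>i'}\sum_{n=1}^N(\Lambda_{ni}-\Lambda_{ni'})^2>0$, and let $U_\circ$ be an orthogonal matrix with ${\rm low}(U_\circ^TM_nU_\circ)=0$ for all $n$. Then $$T=\sum_nt_n^Tt_n,\qquad t_n=P_{\rm low}\big(1\otimes U_\circ^TM_n^TU_\circ-U_\circ^TM_nU_\circ\otimes1\big)P_{\rm low}^T$$ is invertible, and $\sigma_{\min}(T)\ge\frac{\gamma}{\kappa(V)^4}$ and $\|T^{-1}\|\le\sqrt{\frac{d(d-1)}2}\,\frac{\kappa(V)^4}{\gamma}$.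
   Context: All matrices are real. ${\rm low}(A)$ is the strictly lower-triangular part of $A$. $\otimes$ is the Kronecker product, $1$ the identity. $P_{\rm low}\in\{0,1\}^{\frac{d(d-1)}2\times d^2}$ has as rows the standard basis row vectors of $\mathbb R^{d^2}$ selecting (in increasing order) the entries of the column-wise vectorization ${\rm vec}(A)$ corresponding to strictly lower-triangular entries of $A$. $\|\cdot\|$ is the Frobenius norm, $\sigma_{\min}$ the smallest singular value, $\kappa(V)=\sigma_{\max}(V)/\sigma_{\min}(V)$. *)

(* Defs.v *)
From HB Require Import structures.
From mathcomp Require Import all_boot all_order all_algebra.
From mathcomp Require Import boolp classical_sets reals.
Set Implicit Arguments. Unset Strict Implicit. Unset Printing Implicit Defensive.
Import Order.TTheory GRing.Theory Num.Theory.
Local Open Scope ring_scope.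

Section Defs.
Variable R : realType.

Lemma div_ord_lt d (i : 'I_(d * d)) : (i %/ d < d)%N.
Proof.
case: d i => [|d] i; first by case: i.
by rewrite ltn_divLR // ltn_ord.
Qed.

Lemma mod_ord_lt d (i : 'I_(d * d)) : (i %% d < d)%N.
Proof.
case: d i => [|d] i; first by case: i.
by rewrite ltn_pmod.
Qed.

Definition odiv d (i : 'I_(d * d)) : 'I_d := Ordinal (div_ord_lt i).
Definition omod d (i : 'I_(d * d)) : 'I_d := Ordinal (mod_ord_lt i).

(* Standard Kronecker product, flattened index (i1,i2) |-> i1*d + i2. *)
Definition kron d (A B : 'M[R]_d) : 'M[R]_(d * d) :=
  \matrix_(i, j) (A (odiv i) (odiv j) * B (omod i) (omod j)).

(* Column-wise vectorization: vec(A)_k = A (k %% d) (k %/ d).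
   Indices k of vec(A) corresponding to strictly lower-triangular entries,
   in increasing order. *)
Definition low_idx d : seq nat :=
  [seq k <- iota 0 (d * d) | (k %/ d < k %% d)%N].

Definition Plow d : 'M[R]_((d * (d - 1)) %/ 2, d * d) :=
  \matrix_(m, k) ((nth 0%N (low_idx d) m == k)%:R).

Definition frob m n (A : 'M[R]_(m, n)) : R :=
  Num.sqrt (\sum_i \sum_j A i j ^+ 2).

Definition sigma_max n (A : 'M[R]_n) : R :=
  sup [set frob (A *m x) | x in [set x : 'cV[R]_n | frob x = 1]].
Definition sigma_min n (A : 'M[R]_n) : R :=
  inf [set frob (A *m x) | x in [set x : 'cV[R]_n | frob x = 1]].
Definition kappa n (A : 'M[R]_n) : R := sigma_max A / sigma_min A.

End Defs.

(* Main.v *)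
Require Import Defs.
From HB Require Import structures.
From mathcomp Require Import all_boot all_order all_algebra.
From mathcomp Require Import boolp classical_sets reals.
From mathcomp Require Import ring lra zify.
Set Implicit Arguments. Unset Strict Implicit. Unset Printing Implicit Defensive.
Import Order.TTheory GRing.Theory Num.Theory.
Local Open Scope ring_scope.
Section Norms.
Variable R : realType.

Definition ssq m n (A : 'M[R]_(m, n)) : R := \sum_i \sum_j A i j ^+ 2.
Definition dot n (u v : 'cV[R]_n) : R := \sum_i u i 0 * v i 0.

Lemma ssq_ge0 m n (A : 'M[R]_(m, n)) : 0 <= ssq A.
Proof. by apply: sumr_ge0 => i _; apply: sumr_ge0 => j _; apply: sqr_ge0. Qed.

Lemma frobE m n (A : 'M[R]_(m, n)) : frob A = Num.sqrt (ssq A).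
Proof. by []. Qed.

Lemma ssq_cV n (u : 'cV[R]_n) : ssq u = \sum_i u i 0 ^+ 2.
Proof. by apply: eq_bigr => i _; rewrite big_ord1. Qed.

Lemma dotE n (u v : 'cV[R]_n) : (u^T *m v) 0 0 = dot u v.
Proof. by rewrite mxE; apply: eq_bigr => i _; rewrite mxE. Qed.

Lemma dotuu n (u : 'cV[R]_n) : dot u u = ssq u.
Proof. by rewrite ssq_cV; apply: eq_bigr => i _; rewrite expr2. Qed.

Lemma ssq_eq0 m n (A : 'M[R]_(m, n)) : ssq A = 0 -> A = 0.
Proof.
move=> /eqP; rewrite psumr_eq0; last by move=> i _; apply: sumr_ge0 => j _; apply: sqr_ge0.
move=> /allP H; apply/matrixP => i j; rewrite mxE.
have /H := mem_index_enum i; rewrite /= psumr_eq0; last by move=> k _; apply: sqr_ge0.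
move=> /allP H2; have /H2 := mem_index_enum j.
by rewrite /= sqrf_eq0 => /eqP.
Qed.

Lemma cauchy_schwarz n (u v : 'cV[R]_n) : dot u v ^+ 2 <= ssq u * ssq v.
Proof.
have [/ssq_eq0 -> | hu] := eqVneq (ssq u) 0.
  rewrite /dot big1 => [|i _]; last by rewrite mxE mul0r.
  by rewrite expr0n /= mulr_ge0 // ssq_ge0.
have hu0 : 0 < ssq u by rewrite lt_def hu ssq_ge0.
set a := ssq u; set b := dot u v; set c := ssq v.
have H : 0 <= \sum_i (a * v i 0 - b * u i 0) ^+ 2 by apply: sumr_ge0 => i _; apply: sqr_ge0.
have E : \sum_i (a * v i 0 - b * u i 0) ^+ 2 = a ^+ 2 * c - 2 * a * b ^+ 2 + b ^+ 2 * a.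
  have -> : \sum_i (a * v i 0 - b * u i 0) ^+ 2 =
     \sum_i (a ^+ 2 * v i 0 ^+ 2 - 2 * a * b * (u i 0 * v i 0) + b ^+ 2 * u i 0 ^+ 2).
    by apply: eq_bigr => i _; ring.
  rewrite !big_split /= sumrN -!mulr_sumr /c /a /b /dot !ssq_cV.
  ring.
rewrite E in H.
have : 0 <= a * (a * c - b ^+ 2) by rewrite mulrBr; move: H; rewrite -!mulrA; nra.
by rewrite pmulr_rge0 // subr_ge0 mulrC.
Qed.

Lemma ssq_tr m n (A : 'M[R]_(m, n)) : ssq A^T = ssq A.
Proof. by rewrite /ssq exchange_big; apply: eq_bigr => i _; apply: eq_bigr => j _; rewrite mxE. Qed.

Lemma ssq_cols m n (M : 'M[R]_(m, n)) : ssq M = \sum_j ssq (col j M).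
Proof.
rewrite /ssq exchange_big; apply: eq_bigr => j _; apply: eq_bigr => i _.
by rewrite big_ord1 mxE.
Qed.

Lemma col_mulmx m p n (A : 'M[R]_(m, p)) (M : 'M[R]_(p, n)) j :
  col j (A *m M) = A *m col j M.
Proof. by apply/matrixP => i k; rewrite !mxE; apply: eq_bigr => l _; rewrite !mxE. Qed.

Lemma left_bound m p n (A : 'M[R]_(m, p)) (s : R) :
  (forall x : 'cV_p, ssq (A *m x) <= s * ssq x) ->
  forall M : 'M_(p, n), ssq (A *m M) <= s * ssq M.
Proof.
move=> H M; rewrite !ssq_cols mulr_sumr; apply: ler_sum => j _.
by rewrite col_mulmx.
Qed.

Lemma right_bound m p n (A : 'M[R]_(p, n)) (s : R) :
  (forall x : 'cV_p, ssq (A^T *m x) <= s * ssq x) ->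
  forall M : 'M_(m, p), ssq (M *m A) <= s * ssq M.
Proof.
move=> H M; rewrite -ssq_tr trmx_mul -(ssq_tr M).
exact: left_bound.
Qed.

Lemma tr_bound m n (A : 'M[R]_(m, n)) (s : R) : 0 <= s ->
  (forall x : 'cV_n, ssq (A *m x) <= s * ssq x) ->
  forall y : 'cV_m, ssq (A^T *m y) <= s * ssq y.
Proof.
move=> s0 H y; set w := A^T *m y.
have [w0|wn0] := eqVneq (ssq w) 0; first by rewrite w0 mulr_ge0 // ssq_ge0.
have wp : 0 < ssq w by rewrite lt_def wn0 ssq_ge0.
have E : ssq w = dot y (A *m w).
  by rewrite -dotuu -!dotE /w trmx_mul trmxK !mulmxA.
have CS := cauchy_schwarz y (A *m w).
rewrite -E in CS.
have : ssq w ^+ 2 <= ssq y * (s * ssq w).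
  apply: (le_trans CS); apply: ler_wpM2l; [exact: ssq_ge0 | exact: H].
rewrite expr2 mulrA [_ * s]mulrC => h.
by rewrite -(ler_pM2r wp).
Qed.

Lemma ssq_scale m n (a : R) (A : 'M[R]_(m, n)) : ssq (a *: A) = a ^+ 2 * ssq A.
Proof.
rewrite /ssq mulr_sumr; apply: eq_bigr => i _; rewrite mulr_sumr; apply: eq_bigr => j _.
by rewrite mxE exprMn.
Qed.

Lemma frob_scale m n (a : R) (A : 'M[R]_(m, n)) : frob (a *: A) = `|a| * frob A.
Proof. by rewrite !frobE ssq_scale sqrtrM ?sqr_ge0 // sqrtr_sqr. Qed.

Lemma ssq_mul_le m n (A : 'M[R]_(m, n)) (x : 'cV_n) : ssq (A *m x) <= ssq A * ssq x.
Proof.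
rewrite ssq_cV /ssq mulr_suml; apply: ler_sum => i _.
have -> : (A *m x) i 0 = dot (row i A)^T x.
  by rewrite mxE; apply: eq_bigr => j _; rewrite !mxE.
apply: le_trans (cauchy_schwarz _ _) _; rewrite ssq_cV.
by apply: ler_wpM2r; [exact: ssq_ge0 | rewrite le_eqVlt; apply/orP; left; apply/eqP; apply: eq_bigr => j _; rewrite !mxE].
Qed.

Definition Sset n (A : 'M[R]_n) : set R := [set frob (A *m x) | x in [set x : 'cV[R]_n | frob x = 1]].

Lemma Sset_ub n (A : 'M[R]_n) : has_ubound (Sset A).
Proof.
exists (Num.sqrt (ssq A)) => y [x /= hx <-].
rewrite frobE ler_sqrt ?ssq_ge0 //.
have : ssq x = 1 by rewrite -[ssq x]sqr_sqrtr ?ssq_ge0 // -frobE hx expr1n.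
by move=> e; apply: le_trans (ssq_mul_le _ _) _; rewrite e mulr1.
Qed.

Lemma Sset_lb n (A : 'M[R]_n) : has_lbound (Sset A).
Proof. by exists 0 => y [x _ <-]; exact: sqrtr_ge0. Qed.

Lemma frob_ge0 m n (A : 'M[R]_(m, n)) : 0 <= frob A.
Proof. exact: sqrtr_ge0. Qed.

Lemma normalize n (x : 'cV[R]_n) : x != 0 ->
  0 < frob x /\ frob ((frob x)^-1 *: x) = 1.
Proof.
move=> xn0; have fp : 0 < frob x.
  rewrite lt_def frob_ge0 andbT; apply/eqP => h; move: xn0; rewrite -(@ssq_eq0 _ _ x) ?eqxx //.
  by rewrite -[ssq x]sqr_sqrtr ?ssq_ge0 // -frobE h expr0n.
split => //; rewrite frob_scale ger0_norm ?invr_ge0 ?frob_ge0 // mulVf //.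
by rewrite gt_eqF.
Qed.

Lemma ub_sigma n (A : 'M[R]_n) (x : 'cV_n) : frob (A *m x) <= sigma_max A * frob x.
Proof.
have [->|xn0] := eqVneq x 0.
  by rewrite mulmx0 !frobE /ssq !big1 ?sqrtr0 ?mulr0 // => i _; rewrite big1 // => j _; rewrite mxE expr0n.
have [fp fu] := normalize xn0.
have h : Sset A (frob (A *m ((frob x)^-1 *: x))) by exists ((frob x)^-1 *: x).
have := ub_le_sup (Sset_ub A) h.
rewrite -scalemxAr frob_scale ger0_norm ?invr_ge0 ?frob_ge0 //.
by rewrite ler_pdivrMl // mulrC.
Qed.

Lemma lb_sigma n (A : 'M[R]_n) (x : 'cV_n) : sigma_min A * frob x <= frob (A *m x).
Proof.
have [->|xn0] := eqVneq x 0.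
  by rewrite mulmx0 !frobE /ssq !big1 ?sqrtr0 ?mulr0 // => i _; rewrite big1 // => j _; rewrite mxE expr0n.
have [fp fu] := normalize xn0.
have h : Sset A (frob (A *m ((frob x)^-1 *: x))) by exists ((frob x)^-1 *: x).
have := ge_inf (Sset_lb A) h.
rewrite -scalemxAr frob_scale ger0_norm ?invr_ge0 ?frob_ge0 //.
by rewrite ler_pdivlMl // mulrC.
Qed.


Section Vec.
Variable d : nat.

Lemma hlt (a b : 'I_d) : (b * d + a < d * d)%N.
Proof. have := ltn_ord a; have := ltn_ord b; nia. Qed.

Definition hpair (a b : 'I_d) : 'I_(d * d) := Ordinal (hlt a b).

Lemma odiv_h a b : odiv (hpair a b) = b.
Proof.
have dp : (0 < d)%N := leq_ltn_trans (leq0n _) (ltn_ord a).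
by apply: val_inj => /=; rewrite divnMDl // divn_small ?addn0.
Qed.

Lemma omod_h a b : omod (hpair a b) = a.
Proof. by apply: val_inj => /=; rewrite modnMDl modn_small. Qed.

Lemma h_odmod k : hpair (omod k) (odiv k) = k.
Proof. by apply: val_inj => /=; rewrite -divn_eq. Qed.

Lemma big_flat (T : Type) (idx : T) (op : Monoid.com_law idx) (F : 'I_d -> 'I_d -> T) :
  \big[op/idx]_(k < d * d) F (omod k) (odiv k) = \big[op/idx]_(a < d) \big[op/idx]_(b < d) F a b.
Proof.
rewrite pair_big /=.
rewrite (reindex (fun p : 'I_d * 'I_d => hpair p.1 p.2)) /=.
  by apply: eq_bigr => [[a b]] _ /=; rewrite omod_h odiv_h.
exists (fun k => (omod k, odiv k)).
  by move=> [a b] _ /=; rewrite omod_h odiv_h.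
by move=> k _ /=; rewrite h_odmod.
Qed.

Definition vecc (X : 'M[R]_d) : 'cV[R]_(d * d) := \col_k X (omod k) (odiv k).

Lemma ssq_vecc X : ssq (vecc X) = ssq X.
Proof.
rewrite ssq_cV (eq_bigr (fun k => X (omod k) (odiv k) ^+ 2)); last by move=> k _; rewrite mxE.
by rewrite (big_flat _ (fun a b => X a b ^+ 2)).
Qed.

Lemma kron_vecc (A C X : 'M[R]_d) : kron A C *m vecc X = vecc (C *m X *m A^T).
Proof.
apply/matrixP => k z; rewrite !mxE.
rewrite (eq_bigr (fun j => (fun a b => A (odiv k) b * C (omod k) a * X a b) (omod j) (odiv j))); last first.
  by move=> j _; rewrite !mxE.
rewrite (big_flat _ (fun a b => A (odiv k) b * C (omod k) a * X a b)) exchange_big /=.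
apply: eq_bigr => b _; rewrite !mxE mulr_suml; apply: eq_bigr => a _; ring.
Qed.

Lemma vecc_inj_sum (z : 'cV[R]_(d * d)) : vecc (\matrix_(a, b) z (hpair a b) 0) = z.
Proof. by apply/matrixP => k j; rewrite !mxE h_odmod; case: j => [[]] //= ?; congr (z _ _); apply: val_inj. Qed.

End Vec.

Section Low.
Variable d : nat.
Local Notation D := ((d * (d - 1)) %/ 2)%N.
Local Notation s := (low_idx d).

Lemma low_mem k : (k \in s) = (k < d * d)%N && (k %/ d < k %% d)%N.
Proof. by rewrite mem_filter mem_iota andbC. Qed.

Lemma low_uniq : uniq s.
Proof. exact/filter_uniq/iota_uniq. Qed.

Lemma inner_count (a : 'I_d) : (\sum_(b < d) (if (b < a)%N then 1 else 0) = a)%N.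
Proof.
rewrite -(big_mkord xpredT (fun b => if (b < a)%N then 1 else 0)%N).
rewrite (big_cat_nat _ (n := a)) //=; last exact: ltnW.
rewrite (eq_big_nat _ _ (F2 := fun=> 1%N)); last by move=> i /andP[_ ->].
rewrite sum_nat_const_nat big_nat_cond big1 ?muln1 ?subn0 ?addn0 //.
by move=> i /andP[/andP[hi _] _]; rewrite ltnNge hi.
Qed.

Lemma low_size : size s = D.
Proof.
rewrite size_filter -sum1_count.
rewrite -[X in iota 0 X]subn0 -/(index_iota 0 (d * d)).
rewrite big_mkord big_mkcond /=.
rewrite (big_flat _ (fun a b => if (b < a)%N then 1 else 0)%N).
rewrite (eq_bigr (fun a : 'I_d => nat_of_ord a)); last by move=> a _; exact: inner_count.
rewrite -(big_mkord xpredT (fun a => a)) bin2_sum bin2 -divn2 subn1.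
by [].
Qed.

Lemma nth_lt (m : 'I_D) : (nth 0%N s m < d * d)%N.
Proof.
have : nth 0%N s m \in s by apply: mem_nth; rewrite low_size.
by rewrite low_mem => /andP[].
Qed.

Lemma nth_low (m : 'I_D) : (nth 0%N s m %/ d < nth 0%N s m %% d)%N.
Proof.
have : nth 0%N s m \in s by apply: mem_nth; rewrite low_size.
by rewrite low_mem => /andP[].
Qed.

Definition nthl (m : 'I_D) : 'I_(d * d) := Ordinal (nth_lt m).

Lemma PlowE m k : Plow R d m k = (nthl m == k)%:R.
Proof. by rewrite mxE. Qed.

Lemma sum_pick (k0 : 'I_(d * d)) (f : 'I_(d * d) -> R) :
  \sum_k (k0 == k)%:R * f k = f k0.
Proof.
rewrite (bigD1 k0) //= eqxx mul1r big1 ?addr0 // => k /negPf.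
by rewrite eq_sym => ->; rewrite mul0r.
Qed.

Lemma nthl_inj m m' : (nthl m == nthl m') = (m == m').
Proof.
rewrite -val_eqE /= nth_uniq ?low_size //; exact: low_uniq.
Qed.

Lemma PPt : Plow R d *m (Plow R d)^T = 1%:M.
Proof.
apply/matrixP => m m'; rewrite !mxE.
rewrite (eq_bigr (fun k => (nthl m == k)%:R * (nthl m' == k)%:R)); last by move=> k _; rewrite !mxE.
by rewrite sum_pick eq_sym nthl_inj.
Qed.

Lemma Pt_low (x : 'cV[R]_D) (k : 'I_(d * d)) :
  ~~ (odiv k < omod k)%N -> ((Plow R d)^T *m x) k 0 = 0.
Proof.
move=> hk; rewrite mxE big1 // => m _; rewrite !mxE.
case: eqP => [e|]; last by rewrite mul0r.
by move: hk; rewrite /= -e nth_low.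
Qed.

Lemma ssq_Plow (w : 'cV[R]_(d * d)) :
  (forall k, ~~ (odiv k < omod k)%N -> w k 0 = 0) -> ssq (Plow R d *m w) = ssq w.
Proof.
move=> hw; rewrite !ssq_cV.
rewrite (eq_bigr (fun m => w (nthl m) 0 ^+ 2)); last first.
  move=> m _; rewrite mxE (eq_bigr (fun k => (nthl m == k)%:R * w k 0)) ?sum_pick //.
  by move=> k _; rewrite mxE.
rewrite (eq_bigr (fun k => \sum_m (nthl m == k)%:R * w k 0 ^+ 2)).
  by rewrite exchange_big /=; apply: eq_bigr => m _; rewrite sum_pick.
move=> k _; have [hk|hk] := boolP (odiv k < omod k)%N; last first.
  by rewrite hw // expr0n /= big1 // => m _; rewrite mulr0.
have kin : (val k \in s) by rewrite low_mem ltn_ord.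
have ilt : (index (val k) s < D)%N by rewrite -low_size index_mem.
rewrite (bigD1 (Ordinal ilt)) //= big1 ?addr0.
  have -> : nthl (Ordinal ilt) = k by apply: val_inj => /=; rewrite nth_index.
  by rewrite eqxx mul1r.
move=> m hm; case: eqP => [e|]; last by rewrite mul0r.
move: hm; rewrite -nthl_inj.
have -> : nthl (Ordinal ilt) = k by apply: val_inj => /=; rewrite nth_index.
by rewrite e eqxx.
Qed.

End Low.

Section Tri.
Variable d : nat.

Definition lowt (A : 'M[R]_d) := forall r c : 'I_d, (r < c)%N -> A r c = 0.

Lemma lowt_mul A C : lowt A -> lowt C -> lowt (A *m C).
Proof.
move=> hA hC r c rc; rewrite mxE big1 // => k _.
have [rk|kr] := ltnP r k; first by rewrite hA // mul0r.
by rewrite hC ?mulr0 //; exact: leq_ltn_trans kr rc.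
Qed.

Lemma lowt_add A C : lowt A -> lowt C -> lowt (A + C).
Proof. by move=> hA hC r c rc; rewrite mxE hA // hC // addr0. Qed.

Lemma lowt_opp A : lowt A -> lowt (- A).
Proof. by move=> hA r c rc; rewrite mxE hA // oppr0. Qed.

Lemma lowt_scale a A : lowt A -> lowt (a *: A).
Proof. by move=> hA r c rc; rewrite mxE hA // mulr0. Qed.

Lemma lowt_scalar a : lowt (a%:M).
Proof. by move=> r c rc; rewrite mxE; case: eqP => [e|]; [move: rc; rewrite e ltnn | rewrite mulr0n]. Qed.

Lemma lowt_sum (I : finType) (F : I -> 'M[R]_d) : (forall i, lowt (F i)) -> lowt (\sum_i F i).
Proof. by move=> h r c rc; rewrite summxE big1 // => i _; rewrite h. Qed.

Definition prodm (s : seq 'I_d) (F : 'I_d -> 'M[R]_d) := foldr (fun j A => F j *m A) 1%:M s.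

Lemma prodm_lowt s F : (forall j, lowt (F j)) -> lowt (prodm s F).
Proof. move=> h; elim: s => [|j s IH] /=; [exact: lowt_scalar | exact: lowt_mul]. Qed.

Lemma prodm_conj G Gi s F : G *m Gi = 1%:M -> Gi *m G = 1%:M ->
  Gi *m prodm s F *m G = prodm s (fun j => Gi *m F j *m G).
Proof.
move=> h1 h2; elim: s => [|j s IH] /=; first by rewrite mulmx1.
by rewrite -IH !mulmxA -[Gi *m F j *m G *m Gi]mulmxA h1 mulmx1.
Qed.

Lemma prodm_diag s (r : 'I_d -> 'rV[R]_d) :
  prodm s (fun j => diag_mx (r j)) = diag_mx (\row_k \prod_(j <- s) r j 0 k).
Proof.
elim: s => [|j s IH] /=.
  by apply/matrixP => a b; rewrite !mxE big_nil.
rewrite IH mul_diag_mx; apply/matrixP => a b; rewrite !mxE big_cons.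
by case: (a == b); rewrite ?mulr1n ?mulr0n ?mulr0.
Qed.

End Tri.


Lemma conj_alg d (G Gi D X : 'M[R]_d) : Gi *m G = 1%:M ->
  (Gi *m D *m G) *m X - X *m (Gi *m D *m G) =
  Gi *m (D *m (G *m X *m Gi) - (G *m X *m Gi) *m D) *m G.
Proof.
move=> h; rewrite mulmxBr mulmxBl !mulmxA.
by rewrite -[Gi *m D *m G *m X *m Gi *m G]mulmxA h mulmx1 mul1mx.
Qed.

Lemma conj_back d (G Gi E : 'M[R]_d) : G *m Gi = 1%:M -> E = G *m (Gi *m E *m G *m Gi).
Proof. by move=> h; rewrite !mulmxA h mul1mx -mulmxA h mulmx1. Qed.

Lemma conj_back2 d (G Gi X : 'M[R]_d) : Gi *m G = 1%:M -> X = Gi *m (G *m X *m Gi *m G).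
Proof. by move=> h; rewrite !mulmxA h mul1mx -mulmxA h mulmx1. Qed.

Section Core.
Variables (d N : nat) (V U : 'M[R]_d) (Lam : 'I_N -> 'I_d -> R) (gamma : R).
Hypothesis Vu : V \in unitmx.
Hypothesis hgam : forall i i' : 'I_d, (i' < i)%N ->
     gamma <= \sum_(n < N) (Lam n i - Lam n i') ^+ 2.
Hypothesis gpos : 0 < gamma.
Hypothesis UtU : U^T *m U = 1%:M.
Hypothesis Bup : forall (n : 'I_N) (i j : 'I_d), (j < i)%N ->
     (U^T *m (V *m diag_mx (\row_k Lam n k) *m invmx V) *m U) i j = 0.

Let Dm n := diag_mx (\row_k Lam n k) : 'M[R]_d.
Let B n := U^T *m (V *m Dm n *m invmx V) *m U.
Let G := V^T *m U.
Let Gi := U^T *m (invmx V)^T.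

Lemma UUt : U *m U^T = 1%:M.
Proof. exact: mulmx1C. Qed.

Lemma GGi : G *m Gi = 1%:M.
Proof.
rewrite /G /Gi mulmxA -(mulmxA V^T) UUt mulmx1 -trmx_mul mulVmx // trmx1.
by [].
Qed.

Lemma GiG : Gi *m G = 1%:M.
Proof.
by rewrite /G /Gi mulmxA -(mulmxA U^T) -trmx_mul mulmxV // trmx1 mulmx1 UtU.
Qed.

Lemma Bt n : (B n)^T = Gi *m Dm n *m G.
Proof.
rewrite /B /Gi /G !trmx_mul !trmxK tr_diag_mx !mulmxA.
by [].
Qed.

Lemma hsym i j : i != j -> gamma <= \sum_(n < N) (Lam n i - Lam n j) ^+ 2.
Proof.
move=> ij; have [lt|gt] := ltnP j i; first exact: hgam.
have lt : (i < j)%N by rewrite ltn_neqAle gt andbT; apply: contra ij => /eqP e; apply/eqP/val_inj.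
rewrite (eq_bigr (fun n => (Lam n j - Lam n i) ^+ 2)); first exact: hgam.
by move=> n _; rewrite -sqrrN opprB.
Qed.


Lemma Blow n : lowt (B n)^T.
Proof. by move=> r c rc; rewrite mxE Bup. Qed.

Section Fix.
Variable i : 'I_d.
Let g j := \sum_(n < N) (Lam n i - Lam n j) ^+ 2.
Let f j k := \sum_(n < N) ((Lam n i - Lam n j) / g j) * (Lam n k - Lam n j).
Let s := [seq j <- enum 'I_d | j != i].

Lemma f_ii j : j != i -> f j i = 1.
Proof.
move=> ji; have gp : 0 < g j by apply: lt_le_trans gpos (hsym _); rewrite eq_sym.
rewrite /f (eq_bigr (fun n => (Lam n i - Lam n j) ^+ 2 / g j)); last first.
  by move=> n _; rewrite mulrAC expr2.
by rewrite -mulr_suml divff // gt_eqF.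
Qed.

Lemma f_jj j : f j j = 0.
Proof. by rewrite /f big1 // => n _; rewrite subrr mulr0. Qed.

Lemma delta_prod : delta_mx i i = prodm s (fun j => diag_mx (\row_k f j k)).
Proof.
rewrite prodm_diag; apply/matrixP => a b; rewrite !mxE.
have -> : \prod_(j <- s) (\row_k f j k) 0 a = \prod_(j <- s) f j a.
  by apply: eq_bigr => j _; rewrite mxE.
have [ai|ai] := eqVneq a i.
  rewrite big1_seq; last by move=> j /andP[_]; rewrite /s mem_filter => /andP[ji _]; rewrite ai f_ii.
  by rewrite ai eq_sym; case: (b == i).
have -> : \prod_(j <- s) f j a = 0.
  apply/eqP; rewrite prodf_seq_eq0; apply/hasP; exists a; last by rewrite /= f_jj eqxx.
  by rewrite /s mem_filter mem_enum ai.
by rewrite mul0rn.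
Qed.

Lemma Fd_sum j : diag_mx (\row_k f j k) =
  \sum_(n < N) ((Lam n i - Lam n j) / g j) *: (Dm n - (Lam n j)%:M).
Proof.
apply/matrixP => a b; rewrite summxE !mxE.
have [ab|ab] := eqVneq a b.
  by rewrite mulr1n /f; apply: eq_bigr => n _; rewrite !mxE ab eqxx !mulr1n.
rewrite mulr0n big1 // => n _; rewrite !mxE (negPf ab) !mulr0n subrr mulr0.
by [].
Qed.

Lemma Q_low : lowt (Gi *m delta_mx i i *m G).
Proof.
rewrite delta_prod prodm_conj ?GGi ?GiG //; apply: prodm_lowt => j.
rewrite Fd_sum mulmx_sumr mulmx_suml; apply: lowt_sum => n.
rewrite -scalemxAr -scalemxAl; apply: lowt_scale.
rewrite mulmxBr mulmxBl mul_mx_scalar -scalemxAl GiG -Bt.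
apply: lowt_add; first exact: Blow.
apply: lowt_opp; rewrite scalemx1; exact: lowt_scalar.
Qed.

Lemma delta_ent (A C : 'M[R]_d) a b : (A *m delta_mx i i *m C) a b = A a i * C i b.
Proof.
rewrite -(mul_delta_mx (0 : 'I_1)) mulmxA -colE -mulmxA -rowE mxE big_ord1 !mxE.
by [].
Qed.

Lemma Ydiag (X : 'M[R]_d) : (forall r c : 'I_d, (r <= c)%N -> X r c = 0) ->
  (G *m X *m Gi) i i = 0.
Proof.
move=> hX; rewrite mxE big1 // => a _; rewrite mxE mulr_suml big1 // => b _.
have [ab|ba] := ltnP a b.
  have := Q_low ab; rewrite delta_ent => h.
  by rewrite mulrC mulrA h mul0r.
by rewrite hX // mulr0 mul0r.
Qed.

End Fix.


Hypothesis dpos : (0 < d)%N.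

Let sig := sigma_max V.
Let mu := sigma_min V.

Lemma sq_le (a b : R) : 0 <= a -> a <= b -> a ^+ 2 <= b ^+ 2.
Proof. by move=> a0 ab; rewrite !expr2; nra. Qed.

Lemma frob_sq m n (A : 'M[R]_(m, n)) : frob A ^+ 2 = ssq A.
Proof. by rewrite frobE sqr_sqrtr // ssq_ge0. Qed.

Lemma unit_ex : exists x : 'cV[R]_d, frob x = 1.
Proof.
exists (delta_mx (Ordinal dpos) 0); rewrite frobE ssq_cV.
rewrite (bigD1 (Ordinal dpos)) //= big1 => [|k kn]; last by rewrite mxE (negPf kn) expr0n.
by rewrite mxE !eqxx expr1n addr0 sqrtr1.
Qed.

Lemma ssq_U (y : 'cV[R]_d) : ssq (U *m y) = ssq y.
Proof. by rewrite -!dotuu -!dotE trmx_mul mulmxA -(mulmxA y^T) UtU mulmx1. Qed.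

Lemma ssq_Ut (y : 'cV[R]_d) : ssq (U^T *m y) = ssq y.
Proof. by rewrite -!dotuu -!dotE trmx_mul trmxK mulmxA -(mulmxA y^T) UUt mulmx1. Qed.

Lemma siginv_pos : 0 < sigma_max (invmx V).
Proof.
have [x hx] := unit_ex.
have := ub_sigma (invmx V) (V *m x); rewrite mulmxA mulVmx // mul1mx hx.
have := frob_ge0 (V *m x); set y := frob _; set t := sigma_max _ => y0 h.
rewrite ltNge; apply/negP => t0.
have : t * y <= 0 by rewrite mulr_le0_ge0.
move=> h'; have := le_trans h h'; rewrite ler10.
by [].
Qed.

Lemma mu_pos : 0 < mu.
Proof.
apply: (@lt_le_trans _ _ (sigma_max (invmx V))^-1); first by rewrite invr_gt0 siginv_pos.
apply: lb_le_inf.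
  by have [x hx] := unit_ex; exists (frob (V *m x)); exists x.
move=> y [x /= hx <-].
have := ub_sigma (invmx V) (V *m x); rewrite mulmxA mulVmx // mul1mx hx.
by rewrite -ler_pdivrMl ?siginv_pos // mulr1.
Qed.

Lemma mu_le_sig : mu <= sig.
Proof.
have [x hx] := unit_ex.
have := lb_sigma V x; have := ub_sigma V x; rewrite hx !mulr1.
move=> h1 h2; exact: le_trans h2 h1.
Qed.

Lemma sig_pos : 0 < sig.
Proof. exact: lt_le_trans mu_pos mu_le_sig. Qed.

Lemma bnd_V (y : 'cV[R]_d) : ssq (V *m y) <= sig ^+ 2 * ssq y.
Proof.
rewrite -!frob_sq -exprMn; have := ub_sigma V y; have := frob_ge0 (V *m y).
by move=> h0 h; apply: sq_le.
Qed.

Lemma bnd_Vi (y : 'cV[R]_d) : ssq (invmx V *m y) <= mu ^-2 * ssq y.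
Proof.
have := lb_sigma V (invmx V *m y); rewrite mulmxA mulmxV // mul1mx => h.
have h2 : mu ^+ 2 * ssq (invmx V *m y) <= ssq y.
  rewrite -!frob_sq -exprMn; apply: sq_le => //; apply: mulr_ge0; [exact: ltW mu_pos | exact: frob_ge0].
have mp := mu_pos.
rewrite -(ler_pM2l (exprn_gt0 2 mp)) mulrA mulfV ?gt_eqF ?exprn_gt0 // mul1r.
exact: h2.
Qed.

Lemma bnd_Vt (y : 'cV[R]_d) : ssq (V^T *m y) <= sig ^+ 2 * ssq y.
Proof. apply: tr_bound; [exact: sqr_ge0 | exact: bnd_V]. Qed.

Lemma bnd_Vit (y : 'cV[R]_d) : ssq ((invmx V)^T *m y) <= mu ^-2 * ssq y.
Proof. apply: tr_bound; [by rewrite invr_ge0 sqr_ge0 | exact: bnd_Vi]. Qed.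

Lemma le_U (y : 'cV[R]_d) : ssq (U *m y) <= 1 * ssq y.
Proof. by rewrite ssq_U mul1r. Qed.
Lemma le_Ut (y : 'cV[R]_d) : ssq (U^T *m y) <= 1 * ssq y.
Proof. by rewrite ssq_Ut mul1r. Qed.

Lemma U_left (M : 'M[R]_d) : ssq (U *m M) <= ssq M.
Proof. by rewrite -[X in _ <= X]mul1r; exact: (left_bound le_U). Qed.
Lemma Ut_left (M : 'M[R]_d) : ssq (U^T *m M) <= ssq M.
Proof. by rewrite -[X in _ <= X]mul1r; exact: (left_bound le_Ut). Qed.
Lemma U_right (M : 'M[R]_d) : ssq (M *m U) <= ssq M.
Proof. by rewrite -[X in _ <= X]mul1r; exact: (right_bound le_Ut). Qed.
Lemma Ut_right (M : 'M[R]_d) : ssq (M *m U^T) <= ssq M.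
Proof. by rewrite -[X in _ <= X]mul1r; apply: right_bound => y; rewrite trmxK; exact: le_U. Qed.

Lemma G_left (M : 'M[R]_d) : ssq (G *m M) <= sig ^+ 2 * ssq M.
Proof.
rewrite /G -mulmxA; apply: le_trans (left_bound bnd_Vt _) _.
by apply: ler_wpM2l; [exact: sqr_ge0 | exact: U_left].
Qed.

Lemma G_right (M : 'M[R]_d) : ssq (M *m G) <= sig ^+ 2 * ssq M.
Proof.
rewrite /G mulmxA; apply: le_trans (U_right _) _.
by apply: right_bound => y; rewrite trmxK; exact: bnd_V.
Qed.

Lemma Gi_left (M : 'M[R]_d) : ssq (Gi *m M) <= mu ^-2 * ssq M.
Proof.
rewrite /Gi -mulmxA; apply: le_trans (Ut_left _) _.
by apply: left_bound; exact: bnd_Vit.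
Qed.

Lemma Gi_right (M : 'M[R]_d) : ssq (M *m Gi) <= mu ^-2 * ssq M.
Proof.
rewrite /Gi mulmxA; apply: le_trans (right_bound _ _) _.
  by move=> y; rewrite trmxK; exact: bnd_Vi.
apply: ler_wpM2l; first by rewrite invr_ge0 sqr_ge0.
exact: Ut_right.
Qed.


Lemma kappa_sq : kappa V ^+ 2 = sig ^+ 2 * mu ^-2.
Proof. by rewrite /kappa exprMn exprVn. Qed.

Lemma kappa_pos : 0 < kappa V.
Proof. by rewrite /kappa divr_gt0 // ?sig_pos ?mu_pos. Qed.

Lemma core (X : 'M[R]_d) : (forall r c : 'I_d, (r <= c)%N -> X r c = 0) ->
  gamma * ssq X <= kappa V ^+ 4 * \sum_(n < N) ssq ((B n)^T *m X - X *m (B n)^T).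
Proof.
move=> hX.
set k2 := sig ^+ 2 * mu ^-2.
have k2p : 0 <= k2 by rewrite mulr_ge0 ?sqr_ge0 // invr_ge0 sqr_ge0.
have -> : kappa V ^+ 4 = k2 * k2 by rewrite (_ : 4 = 2 + 2)%N // exprD kappa_sq.
set Y := G *m X *m Gi.
set E := fun n => Dm n *m Y - Y *m Dm n.
have h1 : forall n, (B n)^T *m X - X *m (B n)^T = Gi *m E n *m G.
  by move=> n; rewrite Bt conj_alg // GiG.
have h2 : forall n, ssq (E n) <= k2 * ssq (Gi *m E n *m G).
  move=> n; rewrite {1}(conj_back (E n) GGi).
  apply: le_trans (G_left _) _; rewrite /k2 -mulrA; apply: ler_wpM2l; first exact: sqr_ge0.
  exact: Gi_right.
have h3 : ssq X <= k2 * ssq Y.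
  rewrite {1}(conj_back2 X GiG) -/Y.
  apply: le_trans (Gi_left _) _; rewrite /k2 [sig ^+ 2 * _]mulrC -mulrA; apply: ler_wpM2l.
    by rewrite invr_ge0 sqr_ge0.
  exact: G_right.
have h4 : gamma * ssq Y <= \sum_(n < N) ssq (E n).
  have eE : forall n, ssq (E n) = \sum_a \sum_b ((Lam n a - Lam n b) * Y a b) ^+ 2.
    move=> n; apply: eq_bigr => a _; apply: eq_bigr => b _.
    rewrite /E /Dm mul_diag_mx mul_mx_diag !mxE; ring.
  rewrite (eq_bigr _ (fun n _ => eE n)) exchange_big /= /ssq mulr_sumr; apply: ler_sum => a _.
  rewrite exchange_big /= mulr_sumr; apply: ler_sum => b _.
  rewrite (eq_bigr (fun n => (Lam n a - Lam n b) ^+ 2 * Y a b ^+ 2)); last by move=> n _; rewrite exprMn.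
  rewrite -mulr_suml; have [ab|ab] := eqVneq a b.
    by rewrite ab /Y Ydiag // expr0n /= !mulr0.
  by apply: ler_wpM2r; [exact: sqr_ge0 | exact: hsym].
have gp := ltW gpos.
apply: le_trans (_ : gamma * (k2 * ssq Y) <= _); first exact: ler_wpM2l.
rewrite mulrCA -mulrA; apply: ler_wpM2l => //.
apply: le_trans h4 _.
rewrite mulr_sumr; apply: ler_sum => n _.
by rewrite h1; exact: h2.
Qed.

End Core.

Lemma unit_vec n (k : 'I_n) : frob (delta_mx k (0 : 'I_1) : 'cV[R]_n) = 1.
Proof.
rewrite frobE ssq_cV (bigD1 k) //= big1 => [|j jn]; last by rewrite mxE (negPf jn) expr0n.
by rewrite mxE !eqxx expr1n addr0 sqrtr1.
Qed.

Lemma ssq_col1 n (j : 'I_n) : ssq (col j (1%:M : 'M[R]_n)) = 1.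
Proof.
rewrite ssq_cV (bigD1 j) //= big1 => [|i ij]; last by rewrite !mxE (negPf ij) mulr0n expr0n.
by rewrite !mxE eqxx mulr1n expr1n addr0.
Qed.

Lemma frob0 m n : frob (0 : 'M[R]_(m, n)) = 0.
Proof. by rewrite frobE /ssq !big1 ?sqrtr0 // => i _; rewrite big1 // => j _; rewrite mxE expr0n. Qed.

Lemma sq_le_inv (a b : R) : 0 <= b -> a ^+ 2 <= b ^+ 2 -> a <= b.
Proof. by move=> b0 h; rewrite !expr2 in h; nra. Qed.

Lemma vecc_sub d (A C : 'M[R]_d) : vecc A - vecc C = vecc (A - C).
Proof. by apply/matrixP => k z; rewrite !mxE. Qed.

Lemma slow_comm d (Bt X : 'M[R]_d) : lowt Bt -> (forall r c : 'I_d, (r <= c)%N -> X r c = 0) ->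
  forall r c : 'I_d, (r <= c)%N -> (Bt *m X - X *m Bt) r c = 0.
Proof.
move=> hB hX r c rc; rewrite !mxE !big1 ?subrr // => k _.
  have [rk|kr] := leqP r k; first by rewrite (hX r k rk) mul0r.
  by rewrite (hB k c (leq_trans kr rc)) mulr0.
have [rk|kr] := ltnP r k; first by rewrite (hB r k rk) mul0r.
by rewrite (hX k c (leq_trans kr rc)) mulr0.
Qed.

End Norms.

Unset Implicit Arguments.

Theorem lemma6 (R : realType) (d N : nat) (V : 'M[R]_d) (Lam : 'I_N -> 'I_d -> R)
  (gamma : R) (U : 'M[R]_d) :
  V \in unitmx ->
  (exists i i' : 'I_d, (i' < i)%N /\
     gamma = \sum_(n < N) (Lam n i - Lam n i') ^+ 2) ->
  (forall i i' : 'I_d, (i' < i)%N ->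
     gamma <= \sum_(n < N) (Lam n i - Lam n i') ^+ 2) ->
  0 < gamma ->
  U^T *m U = 1%:M ->
  (forall (n : 'I_N) (i j : 'I_d), (j < i)%N ->
     (U^T *m (V *m diag_mx (\row_k Lam n k) *m invmx V) *m U) i j = 0) ->
  let M := fun n : 'I_N => V *m diag_mx (\row_k Lam n k) *m invmx V in
  let B := fun n : 'I_N => U^T *m M n *m U in
  let t := fun n : 'I_N =>
    Plow R d *m (kron 1%:M (B n)^T - kron (B n) 1%:M) *m (Plow R d)^T in
  let T := \sum_(n < N) (t n)^T *m t n in
  T \in unitmx /\
  gamma / kappa V ^+ 4 <= sigma_min T /\
  frob (invmx T) <= Num.sqrt ((d * (d - 1)) %/ 2)%:R * (kappa V ^+ 4 / gamma).
Proof.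
move=> Vu [i0 [i0' [lt0 _]]] hgam gpos UtU Bup M B t T.
have dpos : (0 < d)%N := leq_ltn_trans (leq0n _) (ltn_ord i0).
have d2 : (1 < d)%N by have := ltn_ord i0; move: lt0; clear; lia.
have Dpos : (0 < (d * (d - 1)) %/ 2)%N by rewrite divn_gt0 //; move: d2; clear; nia.
have kp : 0 < kappa V := kappa_pos Vu dpos.
set c := gamma / kappa V ^+ 4.
have cp : 0 < c by rewrite divr_gt0 // exprn_gt0.
have key : forall x, c * ssq x <= dot x (T *m x).
  move=> x.
  have -> : dot x (T *m x) = \sum_(n < N) ssq (t n *m x).
    rewrite -dotE /T mulmx_suml mulmx_sumr summxE; apply: eq_bigr => n _.
    by move: (t n) => tn; rewrite -dotuu -dotE trmx_mul !mulmxA.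
  set z := (Plow R d)^T *m x.
  set X := \matrix_(a, b) z (hpair a b) 0 : 'M[R]_d.
  have zX : z = vecc X by rewrite vecc_inj_sum.
  have Xlow : forall r c0 : 'I_d, (r <= c0)%N -> X r c0 = 0.
    move=> r c0 rc; rewrite mxE /z Pt_low //; rewrite odiv_h omod_h -leqNgt //.
  have hx : ssq x = ssq X.
    rewrite -ssq_vecc -zX -(ssq_Plow (w := z)); last by move=> k hk; rewrite /z Pt_low.
    by rewrite /z mulmxA PPt mul1mx.
  have ht : forall n, ssq (t n *m x) = ssq ((B n)^T *m X - X *m (B n)^T).
    move=> n; rewrite /t -mulmxA -/z zX -mulmxA mulmxBl !kron_vecc trmx1 mulmx1 mul1mx vecc_sub.
    rewrite ssq_Plow ?ssq_vecc // => k hk; rewrite mxE.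
    apply: (slow_comm (Blow Bup n) Xlow); rewrite -leqNgt in hk; exact: hk.
  rewrite hx (eq_bigr _ (fun n _ => ht n)).
  have h := core Vu hgam gpos UtU Bup dpos Xlow.
  rewrite /c mulrAC ler_pdivrMr ?exprn_gt0 // mulrC [_ * gamma]mulrC [_ * kappa V ^+ 4]mulrC; exact: h.
have low : forall y : 'cV[R]_((d * (d - 1)) %/ 2), c * frob y <= frob (T *m y).
  move=> y; have [->|yn0] := eqVneq y 0.
    by rewrite mulmx0 !frobE /ssq !big1 ?sqrtr0 ?mulr0 // => i _; rewrite big1 // => j _; rewrite mxE expr0n.
  have sp : 0 < ssq y.
    by rewrite lt_def ssq_ge0 andbT; apply/eqP => /ssq_eq0 e; move: yn0; rewrite e eqxx.
  apply: sq_le_inv; first exact: frob_ge0.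
  rewrite exprMn !frob_sq.
  have h1 := key y; have h2 := cauchy_schwarz y (T *m y).
  have h3 : (c * ssq y) ^+ 2 <= ssq y * ssq (T *m y).
    apply: le_trans h2; apply: sq_le => //; apply: mulr_ge0; [exact: ltW | exact: ssq_ge0].
  rewrite exprMn expr2 mulrA in h3.
  by rewrite -(ler_pM2r sp) expr2 [ssq (T *m y) * _]mulrC.
have Tu : T \in unitmx.
  rewrite -unitmx_tr -row_free_unit; apply: inj_row_free => v hv.
  have e : T *m v^T = 0 by rewrite -[T *m _]trmxK trmx_mul trmxK hv trmx0.
  have := low v^T; rewrite e frob0 => h.
  have f0 : frob v^T = 0.
    apply/eqP; rewrite eq_le frob_ge0 andbT; by rewrite -(pmulr_rle0 _ cp).
  apply/trmx_inj; rewrite trmx0; apply: ssq_eq0.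
  by rewrite -[ssq _]sqr_sqrtr ?ssq_ge0 // -frobE f0 expr0n.
split => //; split.
  apply: lb_le_inf.
    exists (frob (T *m delta_mx (Ordinal Dpos) (0 : 'I_1))).
    by exists (delta_mx (Ordinal Dpos) (0 : 'I_1)) => //=; exact: unit_vec.
  by move=> y [x /= hx <-]; have := low x; rewrite hx mulr1.
set Ti := invmx T.
have colb : forall j, ssq (col j Ti) <= c ^-2.
  move=> j; have := low (col j Ti); rewrite -col_mulmx mulmxV // [frob (col j 1%:M)]frobE ssq_col1 sqrtr1.
  move=> h; rewrite -frob_sq -(ler_pM2l (exprn_gt0 2 cp)) mulfV ?gt_eqF ?exprn_gt0 //.
  by rewrite -exprMn -[X in _ <= X](expr1n _ 2); apply: sq_le => //; apply: mulr_ge0; [exact: ltW | exact: frob_ge0].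
have hs : ssq Ti <= ((d * (d - 1)) %/ 2)%:R * c ^-2.
  rewrite ssq_cols; apply: le_trans (ler_sum _ (fun j _ => colb j)) _.
  by rewrite sumr_const card_ord mulr_natl.
rewrite frobE -[kappa V ^+ 4 / gamma]invf_div -/c.
have -> : c^-1 = Num.sqrt (c ^-2).
  by rewrite -exprVn sqrtr_sqr ger0_norm // invr_ge0 ltW.
rewrite -sqrtrM ?ler0n // ler_sqrt //; apply: mulr_ge0; first exact: ler0n.
by rewrite invr_ge0 sqr_ge0.
Qed.
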